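(* Let $\phi:\mathbf{R}^n\to\mathbf{R}$ be a uniformly convex norm of class $\mathcal{C}^2$ on $\mathbf{R}^n\setminus\{0\}$, let $K\subseteq\mathbf{R}^n$ be closed, let $1<\sigma<\infty$ and $0<s<t<\infty$, and set $$K_{\sigma,s,t}=\bigl\{a+\rho\eta:(a,\eta)\in N^\phi(K),\ s\le\rho\le t,\ \sigma\rho\le r^\phi_K(a,\eta)\bigr\}.$$ Then $\delta^\phi_K$ is differentiable at every point of $K_{\sigma,s,t}$ and $\nabla\delta^\phi_K|K_{\sigma,s,t}$ is Lipschitz continuous.
   Context: A norm $\phi$ on $\mathbf{R}^n$ is uniformly convex if there is $\gamma>0$ such that $x\mapsto\phi(x)-\gamma|x|$ is convex ($|\cdot|$ the Euclidean norm). For closed $K\subseteq\mathbf{R}^n$: $\delta^\phi_K(x)=\inf\{\phi(y-x):y\in K\}$; $N^\phi(K)=\{(a,\eta)\in\mathbf{R}^n\times\mathbf{R}^n: a\in K,\ \phi(\eta)=1,\ \delta^\phi_K(a+s\eta)=s\text{ for some }s>0\}$; and $r^\phi_K(a,\eta)=\sup\{s>0:\delta^\phi_K(a+s\eta)=s\}\in(0,\infty]$ for $(a,\eta)\in N^\phi(K)$. *)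

(* Defs.v *)
From HB Require Import structures.
From mathcomp Require Import all_boot all_order all_algebra.
From mathcomp Require Import all_classical all_reals all_analysis.
Set Implicit Arguments. Unset Strict Implicit. Unset Printing Implicit Defensive.
Import Order.TTheory GRing.Theory Num.Theory.
Import numFieldNormedType.Exports.
Local Open Scope classical_set_scope.
Local Open Scope ring_scope.

Definition ebasis {R : realType} {n : nat} (i : 'I_n) : 'rV[R]_n :=
  delta_mx 0 i.

Definition euclid {R : realType} {n : nat} (x : 'rV[R]_n) : R :=
  Num.sqrt (\sum_(i < n) x ord0 i ^+ 2).

Definition is_norm {R : realType} {n : nat} (phi : 'rV[R]_n -> R) : Prop :=
  (forall x, 0 <= phi x) /\
  (forall x, phi x = 0 -> x = 0) /\
  (forall (c : R) x, phi (c *: x) = `|c| * phi x) /\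
  (forall x y, phi (x + y) <= phi x + phi y).

Definition convex_fun {R : realType} {n : nat} (f : 'rV[R]_n -> R) : Prop :=
  forall x y (l : R), 0 <= l <= 1 ->
    f ((1 - l) *: x + l *: y) <= (1 - l) * f x + l * f y.

Definition unif_convex {R : realType} {n : nat} (phi : 'rV[R]_n -> R) : Prop :=
  exists gamma : R, 0 < gamma /\ convex_fun (fun x => phi x - gamma * euclid x).

Definition C2_on {R : realType} {n : nat} (U : set 'rV[R]_n)
    (f : 'rV[R]_n -> R) : Prop :=
  forall x, U x ->
    {for x, continuous f} /\
    (forall i : 'I_n, derivable f x (ebasis i)) /\
    (forall i : 'I_n, {for x, continuous ('D_(ebasis i) f)}) /\
    (forall i j : 'I_n, derivable ('D_(ebasis i) f) x (ebasis j)) /\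
    (forall i j : 'I_n, {for x, continuous ('D_(ebasis j) ('D_(ebasis i) f))}).

Definition distK {R : realType} {n : nat} (phi : 'rV[R]_n -> R)
    (K : set 'rV[R]_n) (x : 'rV[R]_n) : R :=
  inf [set phi (y - x) | y in K].

Definition normal_bundle {R : realType} {n : nat} (phi : 'rV[R]_n -> R)
    (K : set 'rV[R]_n) : set ('rV[R]_n * 'rV[R]_n) :=
  [set p | K p.1 /\ phi p.2 = 1 /\
           exists s : R, 0 < s /\ distK phi K (p.1 + s *: p.2) = s].

Definition reach_fun {R : realType} {n : nat} (phi : 'rV[R]_n -> R)
    (K : set 'rV[R]_n) (a eta : 'rV[R]_n) : \bar R :=
  ereal_sup [set s%:E | s in [set s : R | 0 < s /\ distK phi K (a + s *: eta) = s]].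

Definition Kst {R : realType} {n : nat} (phi : 'rV[R]_n -> R)
    (K : set 'rV[R]_n) (sigma s t : R) : set 'rV[R]_n :=
  [set x | exists a eta rho,
      normal_bundle phi K (a, eta) /\ s <= rho <= t /\
      ((sigma * rho)%:E <= reach_fun phi K a eta)%E /\
      x = a + rho *: eta].

Definition grad {R : realType} {n : nat} (f : 'rV[R]_n -> R) (x : 'rV[R]_n)
  : 'rV[R]_n := \row_(i < n) ('d f x (ebasis i)).

(* Main.v *)
Require Import Defs.
From HB Require Import structures.
From mathcomp Require Import all_boot all_order all_algebra.
From mathcomp Require Import all_classical all_reals all_analysis.
From mathcomp Require Import lra zify ring.
Import Order.TTheory GRing.Theory Num.Theory.
Import numFieldNormedType.Exports.
Local Open Scope classical_set_scope.
Local Open Scope ring_scope.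

Section S.
Context {R : realType} {n : nat}.
Implicit Types (u v w h z : 'rV[R]_n).

Lemma coord_le_norm v i : `|v ord0 i| <= `|v|.
Proof.
rewrite [leRHS]/Num.Def.normr /= mx_normrE; apply/bigmax_geP; right => /=.
by exists (ord0, i).
Qed.

Lemma norm_le_coord v (c : R) : 0 <= c -> (forall i, `|v ord0 i| <= c) -> `|v| <= c.
Proof.
move=> c0 H; rewrite [leLHS]/Num.Def.normr /= mx_normrE.
apply: bigmax_le => // -[i j] _ /=.
by rewrite (ord1 i); apply: H.
Qed.

Notation ebas := (@ebasis R n).
Lemma ebasE i j : ebas i ord0 j = (j == i)%:R.
Proof. by rewrite /ebasis mxE eqxx. Qed.

Definition lf (p h : 'rV[R]_n) : R := \sum_k h ord0 k * p ord0 k.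

Lemma lf_lin p : linear_for *:%R (lf p).
Proof.
move=> a u v; rewrite /lf scaler_sumr -big_split /=; apply: eq_bigr => k _.
rewrite !mxE mulrDl; congr (_ + _); by rewrite -mulrA.
Qed.

HB.instance Definition _ p := GRing.isLinear.Build R 'rV[R]_n R *:%R (lf p) (lf_lin p).

Lemma lf_bound p h : `|lf p h| <= (\sum_k `|p ord0 k|) * `|h|.
Proof.
rewrite /lf mulr_suml; apply: le_trans (ler_norm_sum _ _ _) _.
apply: ler_sum => k _; rewrite normrM mulrC; apply: ler_wpM2l => //.
exact: coord_le_norm.
Qed.

Lemma lf_cont p : continuous (lf p).
Proof.
apply: (@bounded_linear_continuous _ _ _ (lf p)).
exists ((\sum_k `|p ord0 k|) * 1); split; first by rewrite num_real.
move=> M HM; apply: filterS (@nbhs0_lt _ 'rV[R]_n _ ltr01) => h /= h1.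
apply: le_trans (lf_bound p h) _; apply: (le_trans _ (ltW HM)).
apply: ler_wpM2l; first by apply: sumr_ge0.
exact: ltW.
Qed.

Lemma diff_quad (f : 'rV[R]_n -> R) x p (C r : R) : 0 < r ->
  (forall h, `|h| <= r -> `|f (x + h) - f x - lf p h| <= C * `|h| ^+ 2) ->
  differentiable f x /\ ('d f x : 'rV[R]_n -> R) = lf p.
Proof.
move=> r0 H.
have E : f \o shift x = cst (f x) + lf p +o_ (0 : 'rV[R]_n) id.
  apply/eqaddoP => eps eps0.
  have m0 : 0 < Num.min r (eps / (`|C| + 1)).
    by rewrite lt_min r0 divr_gt0 // ltr_wpDl.
  apply: filterS (@nbhs0_lt _ 'rV[R]_n _ m0) => h /=.
  rewrite lt_min => /andP[hr he].
  have -> : (f \o +%R^~ x - (cst (f x) + lf p)) h = f (x + h) - f x - lf p h.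
    by change (f (h + x) - (f x + lf p h) = f (x + h) - f x - lf p h); rewrite [h + x]addrC opprD addrA.
  apply: le_trans (H h (ltW hr)) _.
  rewrite expr2 mulrA ler_wpM2r //.
  apply: (@le_trans _ _ ((`|C| + 1) * `|h|)).
    by apply: ler_wpM2r => //; apply: le_trans (ler_norm C) _; rewrite lerDl.
  by rewrite mulrC -ler_pdivlMr ?ltr_wpDl // ltW.
have D : ('d f x : 'rV[R]_n -> R) = lf p by apply: diff_unique => //; apply: lf_cont.
split => //; apply/diff_locallyP; rewrite D; split => //; exact: lf_cont.
Qed.

Lemma line_derive (G : 'rV[R]_n -> R) u e t :
  derivable G (u + t *: e) e ->
  is_derive t 1 (fun s : R => G (u + s *: e)) ('D_e G (u + t *: e)).
Proof.
move=> dG.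
have Eq : (fun h : R => h^-1 *: (((fun s : R => G (u + s *: e)) \o shift t) (h *: (1:R))
            - G (u + t *: e))) =
          (fun h : R => h^-1 *: ((G \o shift (u + t *: e)) (h *: e) - G (u + t *: e))).
  apply/funext => h /=; congr (_ *: (G _ - _)).
  by rewrite scaler1 scalerDl addrCA.
split; first by rewrite /derivable Eq.
by rewrite /derive Eq.
Qed.

Lemma line_mvt (G : 'rV[R]_n -> R) u e (T : R) :
  (forall t, `|t| <= `|T| -> derivable G (u + t *: e) e) ->
  exists th, `|th| <= `|T| /\ G (u + T *: e) - G u = T * 'D_e G (u + th *: e).
Proof.
move=> H.
pose F := fun s : R => G (u + s *: e).
have dF (t : R) : `|t| <= `|T| -> is_derive t 1 F ('D_e G (u + t *: e)).
  by move=> /H; apply: line_derive.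
have cF (t : R) : `|t| <= `|T| -> {for t, continuous F}.
  move=> /dF Dt; apply: differentiable_continuous.
  by apply/derivable1_diffP; apply: ex_derive.
have F0 : F 0 = G u by rewrite /F scale0r addr0.
have [T0|T0|->] := ltgtP T 0; last first.
- by exists 0; rewrite normr0 scale0r addr0 subrr mul0r.
- have [c cI Hc] : exists2 c, c \in `]0, T[ & F T - F 0 = 'D_e G (u + c *: e) * (T - 0).
    apply: MVT => // [x|].
      rewrite in_itv /= => /andP[x1 x2].
      apply: dF; rewrite ler_norml (gtr0_norm T0); apply/andP; split; lra.
    apply: continuous_subspace_itv => x; rewrite in_itv /= => /andP[x1 x2]; apply: cF.
    rewrite ler_norml (gtr0_norm T0); apply/andP; split; lra.
  exists c; split.
    move: cI; rewrite in_itv /= => /andP[x1 x2].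
    rewrite ler_norml (gtr0_norm T0); apply/andP; split; lra.
  by move: Hc; rewrite F0 subr0 mulrC.
- have [c cI Hc] : exists2 c, c \in `]T, 0[ & F 0 - F T = 'D_e G (u + c *: e) * (0 - T).
    apply: MVT => // [x|].
      rewrite in_itv /= => /andP[x1 x2].
      apply: dF; rewrite ler_norml (ltr0_norm T0); apply/andP; split; lra.
    apply: continuous_subspace_itv => x; rewrite in_itv /= => /andP[x1 x2]; apply: cF.
    rewrite ler_norml (ltr0_norm T0); apply/andP; split; lra.
  exists c; split.
    move: cI; rewrite in_itv /= => /andP[x1 x2].
    rewrite ler_norml (ltr0_norm T0); apply/andP; split; lra.
  move: Hc; rewrite F0 sub0r mulrN mulrC => /eqP; rewrite -eqr_opp opprB opprK.
  by move/eqP.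
Qed.

Lemma coordB_le (a b : 'rV[R]_n) : (forall i, `|a ord0 i| <= `|b ord0 i|) -> `|a| <= `|b|.
Proof.
move=> H; apply: norm_le_coord => // i; apply: le_trans (H i) _; exact: coord_le_norm.
Qed.

Lemma stair_k (G : 'rV[R]_n -> R) (k : nat) : forall u h,
  (forall i : 'I_n, (k <= i)%N -> h ord0 i = 0) ->
  (forall z, `|z - u| <= `|h| -> forall j, derivable G z (ebas j)) ->
  exists xi : 'I_n -> 'rV[R]_n, (forall j, `|xi j - u| <= `|h|) /\
    G (u + h) - G u = \sum_j h ord0 j * 'D_(ebas j) G (xi j).
Proof.
elim: k => [|k IH] u h hs hd.
  have -> : h = 0 by apply/rowP => i; rewrite mxE hs.
  exists (fun=> u); split=> [j|]; first by rewrite subrr normr0.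
  by rewrite addr0 subrr big1 // => j _; rewrite mxE mul0r.
have [kn|kn] := ltnP k n; last first.
  apply: IH => // i ki; apply: hs; have := ltn_ord i; lia.
pose kk : 'I_n := Ordinal kn.
pose e := ebas kk.
pose h' := h - h ord0 kk *: e.
have h'E i : h' ord0 i = if i == kk then 0 else h ord0 i.
  rewrite /h' /e !mxE eqxx /=; case: eqP => [->|_]; first by rewrite mulr1 subrr.
  by rewrite mulr0 subr0.
have h'le : `|h'| <= `|h|.
  by apply: coordB_le => i; rewrite h'E; case: eqP => // _; rewrite normr0.
have hs' : forall i : 'I_n, (k <= i)%N -> h' ord0 i = 0.
  move=> i ki; rewrite h'E; case: eqP => // /eqP ik; apply: hs.
  rewrite ltn_neqAle ki andbT; apply: contra ik => /eqP ki'.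
  by apply/eqP/val_inj; rewrite /= ki'.
have [xi' [xi'b xi'E]] := IH u h' hs' (fun z zb => hd z (le_trans zb h'le)).
have boxt t : `|t| <= `|h ord0 kk| -> `|u + h' + t *: e - u| <= `|h|.
  move=> tb; rewrite addrC addrA addKr; apply: coordB_le => i.
  rewrite mxE h'E mxE /e ebasE; case: eqP => [->|_].
    by rewrite add0r mulr1.
  by rewrite mulr0 addr0.
have [th [thb thE]] := line_mvt G (u + h') e (h ord0 kk)
  (fun t tb => hd _ (boxt t tb) kk).
have uhE : u + h' + h ord0 kk *: e = u + h by rewrite -addrA subrK.
exists (fun j => if j == kk then u + h' + th *: e else xi' j); split.
  by move=> j; case: eqP => _; [apply: boxt|apply: le_trans (xi'b j) h'le].
have -> : G (u + h) - G u = (G (u + h' + h ord0 kk *: e) - G (u + h')) + (G (u + h') - G u).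
  by rewrite addrA subrK uhE.
rewrite xi'E thE.
rewrite (bigD1 kk) //= [in RHS](bigD1 kk) //= eqxx h'E eqxx mul0r add0r.
congr (_ + _); apply: eq_bigr => j /negPf jk; by rewrite jk h'E jk.
Qed.

Lemma stair (G : 'rV[R]_n -> R) u h :
  (forall z, `|z - u| <= `|h| -> forall j, derivable G z (ebas j)) ->
  exists xi : 'I_n -> 'rV[R]_n, (forall j, `|xi j - u| <= `|h|) /\
    G (u + h) - G u = \sum_j h ord0 j * 'D_(ebas j) G (xi j).
Proof. apply: (stair_k G n) => i; by rewrite leqNgt ltn_ord. Qed.

Lemma sum_bound (F : 'I_n -> R) (c : R) : (forall k, `|F k| <= c) ->
  `|\sum_k F k| <= n%:R * c.
Proof.
move=> H; apply: le_trans (ler_norm_sum _ _ _) _.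
apply: le_trans (ler_sum _ (fun k _ => H k)) _.
by rewrite sumr_const card_ord mulr_natl.
Qed.

Lemma taylor2 (G : 'rV[R]_n -> R) (M : R) w h :
  (forall z, `|z - w| <= `|h| -> (forall j, derivable G z (ebas j)) /\
     (forall i j, derivable ('D_(ebas j) G) z (ebas i)) /\
     (forall i j, `|'D_(ebas i) ('D_(ebas j) G) z| <= M)) ->
  `|G (w + h) - G w - \sum_k h ord0 k * 'D_(ebas k) G w| <= M * (n%:R * `|h|) ^+ 2.
Proof.
move=> H.
have [xi [xib xiE]] := stair G w h (fun z zb => (H z zb).1).
have Dk k : `|'D_(ebas k) G (xi k) - 'D_(ebas k) G w| <= n%:R * (`|h| * M).
  have [ze [zeb zeE]] := stair ('D_(ebas k) G) w (xi k - w)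
    (fun z zb j => (H z (le_trans zb (xib k))).2.1 j k).
  move: zeE; rewrite [w + _]addrC subrK => ->.
  apply: sum_bound => j; rewrite normrM; apply: ler_pM => //.
    exact: le_trans (coord_le_norm _ _) (xib k).
  exact: (H _ (le_trans (zeb j) (xib k))).2.2.
have -> : G (w + h) - G w - \sum_k h ord0 k * 'D_(ebas k) G w =
    \sum_k h ord0 k * ('D_(ebas k) G (xi k) - 'D_(ebas k) G w).
  by rewrite xiE -sumrB; apply: eq_bigr => k _; rewrite mulrBr.
have -> : M * (n%:R * `|h|) ^+ 2 = n%:R * (`|h| * (n%:R * (`|h| * M))).
  by rewrite expr2; ring.
apply: sum_bound => k; rewrite normrM; apply: ler_pM => //.
exact: coord_le_norm.
Qed.

Lemma cbound (lo hi : R) (f : 'rV[R]_n -> R) :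
  (forall z, lo <= `|z| <= hi -> {for z, continuous f}) ->
  exists M, forall z, lo <= `|z| <= hi -> `|f z| <= M.
Proof.
move=> fc.
pose A := [set z : 'rV[R]_n | lo <= `|z| <= hi].
have Acl : closed A.
  have -> : A = (Num.Def.normr : 'rV[R]_n -> R) @^-1` ([set r | lo <= r] `&` [set r | r <= hi]).
    by apply/seteqP; split => z /=; [move/andP|move=> [? ?]; apply/andP].
  apply: (proj1 (continuous_closedP _) (@norm_continuous _ _)).
  by apply: closedI; [apply: closed_ge|apply: closed_le].
have Abd : bounded_set A.
  exists hi; split; first by rewrite num_real.
  by move=> M HM z /andP[_ zh]; apply: le_trans zh (ltW HM).
have Aco := bounded_closed_compact Abd Acl.
have fAco : compact (f @` A).
  apply: continuous_compact => //; apply: continuous_in_subspaceT => z zA.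
  by apply: fc; rewrite inE in zA.
have [M0 [_ HM]] := compact_bounded fAco.
exists (M0 + 1) => z zA; apply: (HM (M0 + 1)); first by rewrite ltrDl.
by exists z.
Qed.

Lemma fin_bound (I : finType) (P : I -> R -> Prop) :
  (forall i M M', M <= M' -> P i M -> P i M') -> (forall i, exists M, P i M) ->
  exists M, 0 <= M /\ forall i, P i M.
Proof.
move=> mono H; have [Mf HM] := choice H.
exists (\sum_i `|Mf i|); split; first by apply: sumr_ge0.
move=> i; apply: mono (HM i); apply: le_trans (ler_norm _) _.
rewrite (bigD1 i) //= lerDl; exact: sumr_ge0.
Qed.

Lemma lfBp p q h : lf (p - q) h = lf p h - lf q h.
Proof. by rewrite /lf -sumrB; apply: eq_bigr => k _; rewrite !mxE mulrBr. Qed.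

Lemma lf_e p k (c : R) : lf p (c *: ebas k) = c * p ord0 k.
Proof.
rewrite /lf (bigD1 k) //= big1 ?addr0; first by rewrite mxE ebasE eqxx mulr1.
by move=> j /negPf jk; rewrite mxE ebasE jk mulr0 mul0r.
Qed.

Lemma norm_e k (c : R) : `|c *: ebas k| <= `|c|.
Proof.
apply: norm_le_coord => // j; rewrite mxE ebasE; case: eqP => _.
  by rewrite mulr1.
by rewrite mulr0 normr0.
Qed.

Lemma lf_eq p q (C r : R) : 0 < r ->
  (forall h, `|h| <= r -> lf q h - C * `|h| ^+ 2 <= lf p h + C * `|h| ^+ 2) -> p = q.
Proof.
move=> r0 H; apply/rowP => k.
set D := p ord0 k - q ord0 k.
suff : D = 0 by move/eqP; rewrite subr_eq0 => /eqP.
pose eps := Num.min (1 / (4 * `|C| + 1)) (r / (`|D| + 1)).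
have e0 : 0 < eps by rewrite lt_min !divr_gt0 // ?ltr_wpDl.
have e1 : eps * (4 * `|C| + 1) <= 1.
  by rewrite -ler_pdivlMr ?ltr_wpDl // ge_min lexx.
have e2 : eps * `|D| <= r.
  apply: le_trans (_ : eps * (`|D| + 1) <= r).
    by apply: ler_wpM2l; [apply: ltW|rewrite lerDl].
  by rewrite -ler_pdivlMr ?ltr_wpDl // ge_min lexx orbT.
have := H (- (eps * D) *: ebas k).
have hn : `|- (eps * D) *: ebas k| <= eps * `|D|.
  by apply: le_trans (norm_e _ _) _; rewrite normrN normrM gtr0_norm.
have hn2 : `|- (eps * D) *: ebas k| ^+ 2 <= (eps * `|D|) ^+ 2.
  by rewrite lerXn2r // ?nnegrE // mulr_ge0 // ltW.
move=> /(_ (le_trans hn e2)); rewrite !lf_e => Hi.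
have HC : C * `|- (eps * D) *: ebas k| ^+ 2 <= `|C| * (eps * `|D|) ^+ 2.
  apply: (@le_trans _ _ (`|C| * `|- (eps * D) *: ebas k| ^+ 2)).
    by apply: ler_wpM2r; [apply: exprn_ge0|apply: ler_norm].
  by apply: ler_wpM2l.
have : eps * D ^+ 2 <= 2 * `|C| * eps ^+ 2 * D ^+ 2.
  have : - (eps * D) * q ord0 k - - (eps * D) * p ord0 k <= 2 * (`|C| * (eps * `|D|) ^+ 2).
    lra.
  have E1 : (eps * `|D|) ^+ 2 = eps ^+ 2 * D ^+ 2 by rewrite exprMn real_normK ?num_real.
  have E2 : - (eps * D) * q ord0 k - - (eps * D) * p ord0 k = eps * D ^+ 2 by rewrite /D; ring.
  rewrite E1 E2 => H2; apply: le_trans H2 _; rewrite !mulrA lexx //.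
rewrite -real_normK ?num_real // => H3.
have : `|D| ^+ 2 * eps <= 0.
  have : `|D| ^+ 2 * eps * (1 - 2 * `|C| * eps) <= 0 by nra.
  have : 1/2 <= 1 - 2 * `|C| * eps.
    have : 0 <= `|C| by [].
    nra.
  have : 0 <= `|D| ^+ 2 * eps by apply: mulr_ge0; [apply: exprn_ge0|apply: ltW].
  nra.
move=> H4.
have H6 : 0 <= `|D| ^+ 2 by apply: exprn_ge0.
have H5 : `|D| ^+ 2 <= 0 by nra.
apply/normr0_eq0/eqP; rewrite -sqrf_eq0 eq_le H5 H6 //.
Qed.

Lemma lip_quad (f : 'rV[R]_n -> R) (g : 'rV[R]_n -> 'rV[R]_n) (S : set 'rV[R]_n)
  (r C M1 : R) : 0 < r -> 0 <= C -> 0 <= M1 ->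
  (forall x, S x -> (forall k, `|g x ord0 k| <= M1) /\
     forall h, `|h| <= r -> `|f (x + h) - f x - lf (g x) h| <= C * `|h| ^+ 2) ->
  forall x y, S x -> S y -> `|g x - g y| <= (6 * C + 4 * M1 / r) * `|x - y|.
Proof.
move=> r0 C0 M0 H x y Sx Sy.
have [Bx Qx] := H x Sx; have [By Qy] := H y Sy.
set d := `|x - y|.
have d0 : 0 <= d by rewrite /d normr_ge0.
set K1 := 4 * M1 / r.
have K1r : K1 * r = 4 * M1 by rewrite /K1 divfK // gt_eqF.
have K10 : 0 <= K1 by rewrite /K1 divr_ge0 // ?mulr_ge0 // ltW.
apply: norm_le_coord; first by apply: mulr_ge0 => //; apply: addr_ge0 => //; apply: mulr_ge0.
move=> k; rewrite !mxE.
have [hd|hd] := leP d (r / 2); last first.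
  apply: le_trans (ler_normB _ _) _.
  have := Bx k; have := By k => b1 b2.
  have h1 : 0 <= K1 * (d - r / 2) by apply: mulr_ge0 => //; rewrite subr_ge0 ltW.
  have h2 : 0 <= C * d by apply: mulr_ge0.
  have h3 : K1 * (r / 2) = 2 * M1 by rewrite mulrA K1r; field.
  lra.
set D := g y ord0 k - g x ord0 k.
pose sg : R := if 0 <= D then 1 else -1.
have sgD : sg * D = `|D| by rewrite /sg; case: ifP => h; [rewrite mul1r ger0_norm|rewrite mulN1r ltr0_norm // ltNge h].
have sgn : `|sg| = 1 by rewrite /sg; case: ifP => _; rewrite ?normrN normr1.
pose z := y + (sg * d) *: ebas k.
have zy : z - y = (sg * d) *: ebas k by rewrite /z addrC addKr.
have nzy : `|z - y| <= d.
  by rewrite zy; apply: le_trans (norm_e _ _) _; rewrite normrM sgn mul1r ger0_norm.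
have Ezx : z - x = (z - y) + (y - x) by rewrite addrA subrK.
have nzx : `|z - x| <= 2 * d.
  rewrite Ezx; apply: le_trans (ler_normD _ _) _; rewrite [`|y - x|]distrC -/d; lra.
have r1 : 2 * d <= r by lra.
have r2 : d <= r by lra.
have r3 : `|y - x| <= r by rewrite [`|y - x|]distrC -/d.
have q1 := Qx (z - x) (le_trans nzx r1).
have q2 := Qy (z - y) (le_trans nzy r2).
have q3 := Qx (y - x) r3.
move: q1 q2 q3; rewrite [x + (z - x)]addrC [y + (z - y)]addrC [x + (y - x)]addrC !subrK.
have LE : lf (g x) (z - x) = lf (g x) (z - y) + lf (g x) (y - x).
  by rewrite {1}Ezx raddfD.
rewrite LE => q1 q2 q3.
have L1 : lf (g y) (z - y) - lf (g x) (z - y) = d * `|D|.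
  rewrite -lfBp zy lf_e !mxE -/D -sgD; ring.
have s1 : C * `|z - x| ^+ 2 <= C * (2 * d) ^+ 2.
  by apply: ler_wpM2l => //; apply: lerXn2r; rewrite ?nnegrE //; apply: mulr_ge0.
have s2 : C * `|z - y| ^+ 2 <= C * d ^+ 2.
  by apply: ler_wpM2l => //; apply: lerXn2r; rewrite ?nnegrE.
have s3 : C * `|y - x| ^+ 2 <= C * d ^+ 2 by rewrite [`|y - x|]distrC.
have key : d * `|D| <= 6 * C * d ^+ 2.
  move: q1 q2 q3; rewrite !ler_norml => /andP[a1 a2] /andP[b1 b2] /andP[c1 c2].
  have -> : 6 * C * d ^+ 2 = C * (2 * d) ^+ 2 + C * d ^+ 2 + C * d ^+ 2 by ring.
  lra.
rewrite distrC -/D.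
have [d00|dpos] := eqVneq d 0.
  move: d00 => /normr0_eq0 /subr0_eq xy; rewrite /D xy subrr normr0.
  by apply: mulr_ge0 => //; apply: addr_ge0 => //; apply: mulr_ge0.
have dp : 0 < d by rewrite lt_def dpos d0.
have : `|D| <= 6 * C * d.
  rewrite -(ler_pM2l dp); have -> : d * (6 * C * d) = 6 * C * d ^+ 2 by ring.
  exact: key.
move=> H1; have h4 : 0 <= K1 * d by apply: mulr_ge0.
rewrite mulrDl; lra.
Qed.

Lemma euclid_le (v : 'rV[R]_n) : euclid v <= n%:R * `|v|.
Proof.
rewrite /euclid.
have S1 : \sum_(i < n) v ord0 i ^+ 2 <= (n%:R * `|v|) ^+ 2.
  apply: le_trans (_ : \sum_(i < n) `|v| ^+ 2 <= _).
    apply: ler_sum => i _; rewrite -real_normK ?num_real //.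
    by apply: lerXn2r; rewrite ?nnegrE // coord_le_norm.
  rewrite sumr_const card_ord -[_ *+ n]mulr_natl exprMn ler_wpM2r ?exprn_ge0 //.
  by rewrite -natrX ler_nat; nia.
apply: le_trans (_ : Num.sqrt ((n%:R * `|v|) ^+ 2) <= _).
  by rewrite ler_sqrt // exprn_ge0 // mulr_ge0.
by rewrite sqrtr_sqr ger0_norm // mulr_ge0.
Qed.

Lemma norm_le_euclid (v : 'rV[R]_n) : `|v| <= euclid v.
Proof.
apply: norm_le_coord; first exact: sqrtr_ge0.
move=> i; rewrite /euclid -sqrtr_sqr ler_sqrt; last by apply: sumr_ge0 => j _; apply: sqr_ge0.
by rewrite (bigD1 i) //= lerDl sumr_ge0 // => j _; apply: sqr_ge0.
Qed.

Lemma lf_e1 p k : lf p (ebas k) = p ord0 k.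
Proof. by rewrite -[ebas k]scale1r lf_e mul1r. Qed.
End S.

Theorem theorem1p4 (R : realType) (n : nat) (phi : 'rV[R]_n -> R)
    (K : set 'rV[R]_n) (sigma s t : R) :
  is_norm phi -> unif_convex phi -> C2_on [set x | x != 0] phi ->
  closed K -> 1 < sigma -> 0 < s -> s < t ->
  (forall x, Kst phi K sigma s t x -> differentiable (distK phi K) x) /\
  (exists L : R, forall x y, Kst phi K sigma s t x -> Kst phi K sigma s t y ->
     euclid (grad (distK phi K) x - grad (distK phi K) y) <= L * euclid (x - y)).
Proof.
move=> [phi0 [phidef [phihom phitri]]] _ HC2 _ s1 s0 st.
have phiN v : phi (- v) = phi v by rewrite -scaleN1r phihom normrN normr1 mul1r.
have phiZ (c : R) v : 0 <= c -> phi (c *: v) = c * phi v.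
  by move=> c0; rewrite phihom ger0_norm.
have phi00 : phi 0 = 0 by rewrite -(scale0r (0 : 'rV[R]_n)) phihom normr0 mul0r.
have nz v : v != 0 -> exists u : 'rV[R]_n, `|u| = 1 /\ v = `|v| *: u.
  move=> v0; exists (`|v|^-1 *: v); split.
    by rewrite normrZ normfV normr_id mulVf // normr_eq0.
  by rewrite scalerA divff ?scale1r // normr_eq0.
have nz0 (z : 'rV[R]_n) (l : R) : 0 < l -> l <= `|z| -> z != 0.
  move=> l0 lz; apply/eqP => z0; move: lz; rewrite z0 normr0; lra.
have [Mu HMu] := cbound 1 1 phi (fun z hz => (HC2 z (nz0 z 1 ltr01 (proj1 (andP hz)))).1).
pose Cp := `|Mu| + 1.
have Cp0 : 0 < Cp by rewrite /Cp ltr_wpDl.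
have phiup v : phi v <= Cp * `|v|.
  have [->|v0] := eqVneq v 0; first by rewrite phi00 normr0 mulr0.
  have [u [u1 vE]] := nz v v0; rewrite {1}vE phiZ // mulrC; apply: ler_wpM2r => //.
  have := HMu u; rewrite u1 lexx => /(_ isT) H1.
  have := ler_norm (phi u); have := ler_norm Mu; rewrite /Cp; lra.
have phinz z : z != 0 -> phi z != 0 by move=> z0; apply/eqP => /phidef; apply/eqP.
have [Mi HMi] := cbound 1 1 (fun z => (phi z)^-1)
  (fun z hz => continuousV (phinz z (nz0 z 1 ltr01 (proj1 (andP hz))))
                 (HC2 z (nz0 z 1 ltr01 (proj1 (andP hz)))).1).
pose Ci := `|Mi| + 1.
have Ci0 : 0 < Ci by rewrite /Ci ltr_wpDl.
have phidown v : `|v| <= Ci * phi v.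
  have [->|v0] := eqVneq v 0; first by rewrite phi00 normr0 mulr0.
  have [u [u1 vE]] := nz v v0; rewrite {2}vE phiZ // mulrCA.
  rewrite -[X in X <= _]mulr1; apply: ler_wpM2l => //.
  have pu : 0 < phi u.
    by rewrite lt_def phi0 andbT phinz // (nz0 u 1 ltr01) // u1.
  have := HMi u; rewrite u1 lexx => /(_ isT) H1.
  have H2 : (phi u)^-1 <= Ci.
    by apply: le_trans (ler_norm _) _; apply: le_trans H1 _; rewrite /Ci; have := ler_norm Mi; lra.
  by have := ler_wpM2l (ltW pu) H2; rewrite mulfV ?gt_eqF // mulrC.
pose sg := (sigma - 1) / 2.
have sg0 : 0 < sg by rewrite /sg divr_gt0 //; lra.
pose q0 := Num.min 1 sg.
pose q1 := Num.max 1 sg.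
have q00 : 0 < q0 by rewrite /q0 lt_min ltr01 sg0.
pose lo := q0 * s / Cp.
pose hi := q1 * t * Ci.
have lo0 : 0 < lo by rewrite /lo divr_gt0 // mulr_gt0.
pose lo2 := lo / 2.
pose hi2 := hi + lo2.
have lo20 : 0 < lo2 by rewrite /lo2 divr_gt0.
have lo2E : lo = lo2 + lo2 by rewrite /lo2 -splitr.
have hi2E : hi2 = hi + lo2 by [].
have nzA (z : 'rV[R]_n) : lo2 <= `|z| -> z != 0 by move=> hz; apply: (nz0 z lo2 lo20 hz).
have [M1 [M10 HM1]] := fin_bound _
  (fun (i : 'I_n) M => forall z, lo2 <= `|z| <= hi2 -> `|'D_(ebasis i) phi z| <= M)
  (fun i M M' MM' H z hz => le_trans (H z hz) MM')
  (fun i => cbound lo2 hi2 _ (fun z hz => (HC2 z (nzA z (proj1 (andP hz)))).2.2.1 i)).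
have [M2 [M20 HM2]] := fin_bound _
  (fun (ij : 'I_n * 'I_n) M => forall z, lo2 <= `|z| <= hi2 ->
     `|'D_(ebasis ij.1) ('D_(ebasis ij.2) phi) z| <= M)
  (fun i M M' MM' H z hz => le_trans (H z hz) MM')
  (fun ij => cbound lo2 hi2 _ (fun z hz => (HC2 z (nzA z (proj1 (andP hz)))).2.2.2.2 ij.2 ij.1)).
pose C := M2 * n%:R ^+ 2.
have C0 : 0 <= C by rewrite /C mulr_ge0 // exprn_ge0.
have TY w h : lo <= `|w| <= hi -> `|h| <= lo2 ->
    `|phi (w + h) - phi w - \sum_k h ord0 k * 'D_(ebasis k) phi w| <= C * `|h| ^+ 2.
  move=> /andP[w1 w2] hb.
  have reg z : `|z - w| <= `|h| -> lo2 <= `|z| <= hi2.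
    move=> zw.
    have t1 : `|w| <= `|w - z| + `|z| by rewrite -{1}(subrK z w) ler_normD.
    have t2 : `|z| <= `|z - w| + `|w| by rewrite -{1}(subrK w z) ler_normD.
    rewrite distrC in t1; apply/andP; split; lra.
  have := taylor2 phi M2 w h (fun z zb =>
    let zr := reg z zb in let z0 := nzA z (proj1 (andP zr)) in
    conj ((HC2 z z0).2.1) (conj (fun i j => (HC2 z z0).2.2.2.1 j i)
      (fun i j => HM2 (i, j) z zr))).
  by rewrite /C exprMn mulrA.
have KEY x : Kst phi K sigma s t x -> exists P : 'rV[R]_n,
    (forall k, `|P ord0 k| <= M1) /\ forall h, `|h| <= lo2 ->
    `|distK phi K (x + h) - distK phi K x - lf P h| <= C * `|h| ^+ 2.
  case=> a [eta [rho [[Ka [peta _]] [/andP[rs rt] [reach ->]]]]].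
  have rho0 : 0 < rho by lra.
  pose rho' := (1 + sigma) / 2 * rho.
  have srho : rho < sigma * rho by rewrite -[X in X < _]mul1r ltr_pM2r.
  have : (rho'%:E < reach_fun phi K a eta)%E.
    apply: lt_le_trans reach; rewrite lte_fin /rho'.
    have : 0 < (sigma - 1) / 2 * rho by apply: mulr_gt0 => //; apply: divr_gt0; lra.
    lra.
  move/ereal_sup_gt => [_ [s0' [s0pos ds0] <-]]; rewrite lte_fin => lt0.
  pose y0 := a + s0' *: eta.
  pose y' := a + rho' *: eta.
  have Dgen z k : K k -> distK phi K z <= phi (k - z).
    move=> Kk; rewrite /distK; apply: (ge_inf _); last by exists k.
    by exists 0 => w [k' _ <-]; apply: phi0.
  have Dlow z : s0' - phi (z - y0) <= distK phi K z.
    rewrite /distK; apply: lb_le_inf; first by exists (phi (a - z)); exists a.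
    move=> w [k Kk <-]; have := Dgen y0 k Kk; rewrite ds0 => H5.
    have := phitri (k - z) (z - y0); rewrite addrA subrK; lra.
  have phie (c : R) : phi (c *: eta) = `|c| by rewrite phihom peta mulr1.
  have glow z : rho' - phi (z - y') <= distK phi K z.
    have := Dlow z; have := phitri (z - y') (y' - y0).
    have -> : z - y' + (y' - y0) = z - y0 by rewrite addrA subrK.
    have -> : y' - y0 = (rho' - s0') *: eta.
      by rewrite /y' /y0 opprD addrACA subrr add0r scalerBl.
    rewrite phie ler0_norm; last by lra.
    lra.
  pose wf := - (rho *: eta).
  pose wg := (rho - rho') *: eta.
  have wfE h : a - (a + rho *: eta + h) = wf + - h by rewrite opprD addrA opprD addNKr.
  have wgE h : a + rho *: eta + h - y' = wg + h.
    by rewrite /wg /y' scalerBl opprD addrAC addrACA subrr add0r.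
  have pwf : phi wf = rho by rewrite phiN phie gtr0_norm.
  have pwg : phi wg = rho' - rho by rewrite phie ler0_norm; [rewrite opprB|rewrite /rho'; lra].
  have e1 : 1 <= Cp * `|eta| by rewrite -peta phiup.
  have e2 : `|eta| <= Ci by rewrite -[Ci]mulr1 -peta phidown.
  have e0 : 0 < `|eta|.
    rewrite normr_gt0; apply/eqP => e00; move: peta; rewrite e00 phi00 => /eqP; by rewrite eq_sym oner_eq0.
  have inr (q : R) : q0 <= q <= q1 -> lo <= q * rho * `|eta| <= hi.
    move=> /andP[q0q qq1]; apply/andP; split.
      rewrite /lo; apply: ler_pM; [|apply: ltW; rewrite invr_gt0 //| |].
      - by apply: mulr_ge0; apply: ltW.
      - by apply: ler_pM => //; apply: ltW.
      - by rewrite -(ler_pM2l Cp0) mulfV ?gt_eqF.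
    have qp : 0 <= q by apply: le_trans q0q; apply: ltW.
    rewrite /hi; apply: ler_pM => //.
    - by apply: mulr_ge0 => //; apply: ltW.
    - by apply: ler_pM => //; apply: ltW.
  have nwf : lo <= `|wf| <= hi.
    rewrite /wf normrN normrZ gtr0_norm // -[rho]mul1r; apply: inr.
    by rewrite /q0 /q1 ge_min le_max lexx.
  have nwg : lo <= `|wg| <= hi.
    rewrite /wg normrZ ler0_norm; last by rewrite /rho'; lra.
    have -> : - (rho - rho') = sg * rho by rewrite /rho' /sg; field.
    by apply: inr; rewrite /q0 /q1 ge_min le_max lexx !orbT.
  pose P := \row_k (- 'D_(ebasis k) phi wf).
  pose Q := \row_k (- 'D_(ebasis k) phi wg).
  have up h : `|h| <= lo2 -> distK phi K (a + rho *: eta + h) <= rho + lf P h + C * `|h| ^+ 2.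
    move=> hb; apply: le_trans (Dgen _ a Ka) _; rewrite wfE.
    have := TY wf (- h) nwf; rewrite normrN => /(_ hb); rewrite pwf.
    have -> : \sum_k (- h) ord0 k * 'D_(ebasis k) phi wf = lf P h.
      by rewrite /lf; apply: eq_bigr => k _; rewrite !mxE mulrN mulNr.
    rewrite ler_norml => /andP[_ H]; lra.
  have low h : `|h| <= lo2 -> rho + lf Q h - C * `|h| ^+ 2 <= distK phi K (a + rho *: eta + h).
    move=> hb; apply: le_trans (glow _); rewrite wgE.
    have := TY wg h nwg hb; rewrite pwg.
    have -> : \sum_k h ord0 k * 'D_(ebasis k) phi wg = - lf Q h.
      by rewrite /lf -sumrN; apply: eq_bigr => k _; rewrite mxE mulrN opprK.
    rewrite ler_norml => /andP[_ H]; lra.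
  have dx : distK phi K (a + rho *: eta) = rho.
    apply/eqP; rewrite eq_le; apply/andP; split.
      by have := up 0; rewrite normr0 addr0 linear0 expr0n /= mulr0 addr0 => /(_ (ltW lo20)); rewrite addr0.
    by have := low 0; rewrite normr0 addr0 linear0 expr0n /= mulr0 subr0 => /(_ (ltW lo20)); rewrite addr0.
  have PQ : P = Q.
    apply: (lf_eq P Q C lo2 lo20) => h hb; have := up h hb; have := low h hb; lra.
  exists P; split.
    move=> k; rewrite mxE normrN; apply: HM1; apply/andP; split; lra.
  move=> h hb; rewrite dx ler_norml; apply/andP; split.
    have := low h hb; rewrite -PQ; lra.
  have := up h hb; lra.
have G1 x : Kst phi K sigma s t x -> differentiable (distK phi K) x /\
    ((forall k, `|grad (distK phi K) x ord0 k| <= M1) /\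
     forall h, `|h| <= lo2 -> `|distK phi K (x + h) - distK phi K x -
        lf (grad (distK phi K) x) h| <= C * `|h| ^+ 2).
  move=> /KEY [P [PB PQ]].
  have [dx dE] := diff_quad (distK phi K) x P C lo2 lo20 PQ.
  have -> : grad (distK phi K) x = P.
    by apply/rowP => k; rewrite /grad mxE dE lf_e1.
  by split.
split; first by move=> x /G1 [].
exists (n%:R * (6 * C + 4 * M1 / lo2)) => x y Kx Ky.
have L0 : 0 <= 6 * C + 4 * M1 / lo2.
  by apply: addr_ge0; [apply: mulr_ge0|apply: divr_ge0; [apply: mulr_ge0|apply: ltW]].
have H := lip_quad (distK phi K) (grad (distK phi K)) (Kst phi K sigma s t) lo2 C M1
  lo20 C0 M10 (fun x Sx => (G1 x Sx).2) x y Kx Ky.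
apply: le_trans (euclid_le _) _.
have -> : n%:R * (6 * C + 4 * M1 / lo2) * euclid (x - y) = n%:R * ((6 * C + 4 * M1 / lo2) * euclid (x - y)) by rewrite mulrA.
apply: ler_wpM2l; first exact: ler0n.
apply: le_trans H _; apply: ler_wpM2l => //; exact: norm_le_euclid.
Qed.
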